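(* Let $f\in C^2(\mathbb T,\mathbb R)$ be non-degenerate. Then $$\mathcal H^0(\{f=0\})=-\frac12\int_0^{2\pi}\big(f''(x)f(x)-f'(x)^2\big)\frac{|f(x)|}{\eta_f(x)^3}\,dx .$$
   Context: $\mathbb T=\mathbb R/2\pi\mathbb Z$, functions on $\mathbb T$ are identified with $2\pi$-periodic functions on $\mathbb R$, and $\mathcal H^0(\{f=0\})$ is the number of zeros of $f$ in one period $[0,2\pi)$. Set $\eta_f(x):=\sqrt{f(x)^2+f'(x)^2}$; $f$ is non-degenerate if $\min_x\eta_f(x)>0$. *)

(* Defs.v *)
From Stdlib Require Import Reals List.
From Coquelicot Require Import Coquelicot.
Open Scope R_scope.

(* f is 2*PI-periodic (a function on the torus T = R / 2 PI Z). *)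
Definition periodic_2pi (f : R -> R) : Prop := forall x, f (x + 2 * PI) = f x.

Definition C2 (f : R -> R) : Prop :=
  (forall x, ex_derive f x) /\
  (forall x, ex_derive (Derive f) x) /\
  (forall x, continuous (Derive (Derive f)) x).

Definition eta (f : R -> R) (x : R) : R := sqrt (f x ^ 2 + Derive f x ^ 2).

(* non-degenerate: min_x eta_f(x) > 0 (the minimum exists by continuity
   and periodicity; we state it as a uniform positive lower bound) *)
Definition nondegenerate (f : R -> R) : Prop :=
  exists c, 0 < c /\ forall x, c <= eta f x.

Definition kac_integrand (f : R -> R) (x : R) : R :=
  (Derive (Derive f) x * f x - Derive f x ^ 2) * Rabs (f x) / eta f x ^ 3.

(* H^0({f = 0}) = n : the zero set of f in one period [0, 2 PI) is finite
   with exactly n elements. *)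
Definition zero_count_is (f : R -> R) (n : nat) : Prop :=
  exists l : list R, NoDup l /\ length l = n /\
    (forall x, In x l <-> (0 <= x < 2 * PI /\ f x = 0)).

(* Main.v *)
Require Import Defs.
From Stdlib Require Import Reals List Lra Lia Classical.
From Coquelicot Require Import Coquelicot.
Open Scope R_scope.

Definition hh f x := Derive f x / eta f x.
Definition dh f x := f x * (Derive (Derive f) x * f x - Derive f x ^ 2) / eta f x ^ 3.
Definition GG f x := if Rlt_dec 0 (f x) then hh f x else if Rlt_dec (f x) 0 then - hh f x else -1.

Lemma sqrt_pos_inv y : 0 < sqrt y -> 0 < y.
Proof. intros H. destruct (Rle_or_lt y 0) as [H'|H']; auto. rewrite sqrt_neg_0 in H; lra. Qed.

Lemma hh_derive f x : ex_derive f x -> ex_derive (Derive f) x -> 0 < eta f x ->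
  is_derive (hh f) x (dh f x).
Proof.
intros H1 H2 Hp. unfold hh, dh. unfold eta in *.
auto_derive.
{ replace (f x * (f x * 1) + Derive f x * (Derive f x * 1)) with (f x ^ 2 + Derive f x ^ 2) by ring.
  repeat split; auto. apply sqrt_pos_inv; auto. lra. }
change (fun x0 => f x0) with f. change (fun x0 => Derive f x0) with (Derive f).
replace (f x * (f x * 1) + Derive f x * (Derive f x * 1)) with (f x ^ 2 + Derive f x ^ 2) by ring.
set (u := f x) in *. set (v := Derive f x) in *. set (w := Derive (Derive f) x).
assert (HS : sqrt (u^2+v^2) * sqrt (u^2+v^2) = u^2+v^2).
{ apply sqrt_sqrt. nra. }
set (S := sqrt (u^2+v^2)) in *.
apply Rmult_eq_reg_r with (S^3). 2: { apply pow_nonzero; lra. }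
field_simplify; try lra.
replace (S^2) with (u^2+v^2) by (rewrite <- HS; ring). field.
Qed.

Lemma cont_dh f (H1 : forall x, ex_derive f x) (H2 : forall x, ex_derive (Derive f) x)
  (H3 : forall x, continuous (Derive (Derive f)) x) (Hp : forall x, 0 < eta f x) x :
  continuous (dh f) x.
Proof.
assert (C0 : forall x, continuous f x) by (intros y; exact (ex_derive_continuous f y (H1 y))).
assert (C1 : forall x, continuous (Derive f) x) by (intros y; exact (ex_derive_continuous (Derive f) y (H2 y))).
assert (Ce : forall x, continuous (eta f) x).
{ intros y. unfold eta. apply continuous_sqrt_comp. simpl.
  apply (continuous_plus (fun y => f y ^ 2) (fun y => Derive f y ^ 2));
  apply (continuous_mult (fun y => f y) (fun y => f y * 1)) || apply (continuous_mult (fun y => Derive f y) (fun y => Derive f y * 1)); try apply (continuous_mult _ (fun _ => 1)); auto; apply continuous_const. }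
unfold dh, Rdiv.
apply (continuous_mult (fun y => f y * (Derive (Derive f) y * f y - Derive f y ^ 2)) (fun y => / eta f y ^ 3)).
- apply (continuous_mult f). auto.
  apply (continuous_minus (fun y => Derive (Derive f) y * f y) (fun y => Derive f y ^ 2)).
  + apply (continuous_mult (Derive (Derive f)) f); auto.
  + simpl. apply (continuous_mult (Derive f) (fun y => Derive f y * 1)); auto.
    apply (continuous_mult _ (fun _ => 1)); auto; apply continuous_const.
- apply continuous_Rinv_comp. 2: { apply pow_nonzero. specialize (Hp x). lra. }
  simpl. apply (continuous_mult (eta f)); auto.
  apply (continuous_mult (eta f)); auto.
  apply (continuous_mult _ (fun _ => 1)); auto; apply continuous_const.
Qed.

Lemma int_sign f (H1 : forall x, ex_derive f x) (H2 : forall x, ex_derive (Derive f) x)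
  (H3 : forall x, continuous (Derive (Derive f)) x) (Hp : forall x, 0 < eta f x)
  s a b : (s = 1 \/ s = -1) -> a <= b -> (forall x, a <= x <= b -> 0 <= s * f x) ->
  is_RInt (kac_integrand f) a b (s * (hh f b - hh f a)).
Proof.
intros Hs Hab Hsg.
assert (Hi : is_RInt (fun x => s * dh f x) a b (minus (s * hh f b) (s * hh f a))).
{ apply (is_RInt_derive (fun x => s * hh f x)).
  - intros x _. apply is_derive_scal. apply hh_derive; auto.
  - intros x _. apply (continuous_mult (fun _ => s) (dh f)). apply continuous_const.
    apply cont_dh; auto. }
replace (s * (hh f b - hh f a)) with (minus (s * hh f b) (s * hh f a)).
2: { unfold minus, plus, opp; simpl. ring. }
apply is_RInt_ext with (2 := Hi).
intros x Hx. rewrite Rmin_left, Rmax_right in Hx by lra.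
assert (Hx' := Hsg x ltac:(lra)).
unfold kac_integrand, dh.
assert (E : Rabs (f x) = s * f x).
{ destruct Hs; subst s. rewrite Rabs_pos_eq; lra. rewrite Rabs_left1; lra. }
rewrite E. enough (K: forall A B D:R, s*(A*B/D) = B*(s*A)/D) by apply K. intros; unfold Rdiv; ring.
Qed.
Lemma eta_zero f z : f z = 0 -> eta f z = Rabs (Derive f z).
Proof. intros Hz. unfold eta. rewrite Hz. rewrite <- sqrt_Rsqr_abs. f_equal. unfold Rsqr. ring. Qed.

Lemma delta_exists f (H1 : forall x, ex_derive f x) (H2 : forall x, ex_derive (Derive f) x)
  (H3 : forall x, continuous (Derive (Derive f)) x) c (Hc : 0 < c) (He : forall x, c <= eta f x) :
  exists d, 0 < d /\ forall z x, 0 <= z <= 2*PI -> 0 <= x <= 2*PI -> f z = 0 ->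
     Rabs (x - z) <= d -> 0 < Derive f x * Derive f z.
Proof.
assert (HP := PI_RGT_0).
destruct (continuity_ab_maj (fun x => Rabs (Derive (Derive f) x)) 0 (2*PI)) as [Mx [HM _]].
{ lra. }
{ intros y _. apply continuity_pt_filterlim. apply (continuous_Rabs_comp (Derive (Derive f))). apply H3. }
set (M := Rabs (Derive (Derive f) Mx)) in *.
assert (HM0 : 0 <= M) by apply Rabs_pos.
exists (c / (2 * (M + 1))). split. { apply Rdiv_lt_0_compat; lra. }
intros z x Hz Hx Fz Hd.
assert (Hfz : c <= Rabs (Derive f z)) by (rewrite <- eta_zero; auto).
destruct (MVT_gen (Derive f) z x (Derive (Derive f))) as [xi [Hxi Heq]].
{ intros y _. apply Derive_correct; auto. }
{ intros y _. apply continuity_pt_filterlim. apply (ex_derive_continuous (Derive f)); auto. }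
assert (Hxi' : 0 <= xi <= 2*PI).
{ destruct (Rle_dec z x). rewrite Rmin_left, Rmax_right in Hxi; lra. rewrite Rmin_right, Rmax_left in Hxi; lra. }
assert (Hb : Rabs (Derive (Derive f) xi) <= M) by (apply HM; auto).
set (e := Derive (Derive f) xi * (x - z)) in *.
assert (He1 : Rabs e <= M * (c / (2 * (M + 1)))).
{ unfold e. rewrite Rabs_mult. apply Rmult_le_compat; auto using Rabs_pos. }
assert (He2 : M * (c / (2 * (M + 1))) = c/2 - c / (2 * (M+1))) by (field; lra).
assert (He3 : 0 < c / (2 * (M+1))) by (apply Rdiv_lt_0_compat; lra).
apply Rabs_le_between in He1.
replace (Derive f x) with (Derive f z + e) by lra.
destruct (Rle_or_lt 0 (Derive f z)).
- rewrite Rabs_pos_eq in Hfz by lra. nra.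
- rewrite Rabs_left in Hfz by lra. nra.
Qed.
Lemma GG_pos f s x : (s = 1 \/ s = -1) -> 0 < s * f x -> GG f x = s * hh f x.
Proof. intros Hs H. unfold GG. destruct Hs; subst; destruct (Rlt_dec 0 (f x)); destruct (Rlt_dec (f x) 0); lra. Qed.
Lemma GG_neg f s x : (s = 1 \/ s = -1) -> s * f x < 0 -> GG f x = - (s * hh f x).
Proof. intros Hs H. unfold GG. destruct Hs; subst; destruct (Rlt_dec 0 (f x)); destruct (Rlt_dec (f x) 0); lra. Qed.
Lemma GG_zero f x : f x = 0 -> GG f x = -1.
Proof. intros H. unfold GG. destruct (Rlt_dec 0 (f x)); destruct (Rlt_dec (f x) 0); lra. Qed.

Lemma mono f (H1 : forall x, ex_derive f x) s (Hs : s = 1 \/ s = -1) a b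
  (Hpos : forall x, a <= x <= b -> 0 < s * Derive f x) u v :
  a <= u -> u < v -> v <= b -> s * f u < s * f v.
Proof.
intros Hu Huv Hv.
destruct (MVT_gen f u v (Derive f)) as [xi [Hxi Heq]].
{ intros y _. apply Derive_correct; auto. }
{ intros y _. apply continuity_pt_filterlim. apply (ex_derive_continuous f); auto. }
rewrite Rmin_left, Rmax_right in Hxi by lra.
assert (Hp := Hpos xi ltac:(lra)).
assert (s * (f v - f u) = s * Derive f xi * (v - u)) by (rewrite Heq; ring).
assert (0 < s * Derive f xi * (v - u)) by (apply Rmult_lt_0_compat; lra).
lra.
Qed.

Lemma ivt f (H1 : forall x, ex_derive f x) a b : a <= b -> (forall x, a <= x <= b -> f x <> 0) ->
  forall x, a <= x <= b -> 0 < f a * f x.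
Proof.
intros Hab Hnz x Hx.
destruct (Rlt_or_le 0 (f a * f x)) as [H|H]; auto. exfalso.
destruct (IVT_gen f a x 0) as [y [Hy Fy]].
{ intros y. apply continuity_pt_filterlim. apply (ex_derive_continuous f); auto. }
{ assert (Ha := Hnz a ltac:(lra)). unfold Rmin, Rmax.
  destruct (Rle_dec (f a) (f x)); split; nra. }
rewrite Rmin_left, Rmax_right in Hy by lra.
apply (Hnz y); auto. lra.
Qed.

Lemma piece f (H1 : forall x, ex_derive f x) (H2 : forall x, ex_derive (Derive f) x)
  (H3 : forall x, continuous (Derive (Derive f)) x) (Hp : forall x, 0 < eta f x) d
  (D : forall z x, 0 <= z <= 2*PI -> 0 <= x <= 2*PI -> f z = 0 ->
     Rabs (x - z) <= d -> 0 < Derive f x * Derive f z) a b :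
  0 <= a -> a < b -> b <= 2 * PI -> b - a <= d ->
  ((forall x, a <= x < b -> f x <> 0) /\ is_RInt (kac_integrand f) a b (GG f b - GG f a))
  \/ (exists z, a <= z < b /\ f z = 0 /\ (forall x, a <= x < b -> f x = 0 -> x = z) /\
       is_RInt (kac_integrand f) a b (GG f b - GG f a - 2)).
Proof.
intros Ha Hab Hb Hd.
destruct (classic (exists z, a <= z <= b /\ f z = 0)) as [[z [Hz Fz]]|Hn].
- assert (Hfz : Derive f z <> 0).
  { intros E. specialize (Hp z). rewrite eta_zero, E, Rabs_R0 in Hp; auto. lra. }
  set (sg := if Rlt_dec 0 (Derive f z) then 1 else -1).
  assert (Hs : sg = 1 \/ sg = -1) by (unfold sg; destruct Rlt_dec; auto).
  assert (Hsz : 0 < sg * Derive f z) by (unfold sg; destruct Rlt_dec; lra).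
  assert (Hhz : sg * hh f z = 1).
  { unfold hh. rewrite eta_zero by auto. unfold sg; destruct Rlt_dec.
    rewrite Rabs_pos_eq by lra. field; auto. rewrite Rabs_left by lra. field; auto. }
  assert (Hpos : forall x, a <= x <= b -> 0 < sg * Derive f x).
  { intros x Hx. assert (K := D z x ltac:(lra) ltac:(lra) Fz ltac:(apply Rabs_le_between'; lra)).
    destruct Hs as [E|E]; rewrite E in *; nra. }
  assert (Mo := mono f H1 sg Hs a b Hpos).
  assert (Lt : forall x, a <= x < z -> sg * f x < 0).
  { intros x Hx. assert (K := Mo x z ltac:(lra) ltac:(lra) ltac:(lra)). rewrite Fz in K. lra. }
  assert (Gt : forall x, z < x <= b -> 0 < sg * f x).
  { intros x Hx. assert (K := Mo z x ltac:(lra) ltac:(lra) ltac:(lra)). rewrite Fz in K. lra. }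
  assert (I1 : is_RInt (kac_integrand f) a z (- sg * (hh f z - hh f a))).
  { apply int_sign; auto. destruct Hs as [E|E]; rewrite E; auto. lra. lra.
    intros x Hx. destruct (Rle_lt_or_eq_dec x z) as [Hl|Hl]; try lra.
    assert (K := Lt x ltac:(lra)). lra. subst x. rewrite Fz. lra. }
  assert (I2 : is_RInt (kac_integrand f) z b (sg * (hh f b - hh f z))).
  { apply int_sign; auto. lra.
    intros x Hx. destruct (Rle_lt_or_eq_dec z x) as [Hl|Hl]; try lra.
    assert (K := Gt x ltac:(lra)). lra. subst x. rewrite Fz. lra. }
  assert (I := is_RInt_Chasles _ _ _ _ _ _ I1 I2).
  assert (HGa : sg * hh f a = - GG f a).
  { destruct (Rle_lt_or_eq_dec a z) as [Hl|Hl]; try lra.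
    - rewrite (GG_neg f sg a Hs (Lt a ltac:(lra))). ring.
    - subst a. rewrite GG_zero by auto. lra. }
  assert (Hss : sg * sg = 1) by (destruct Hs as [E|E]; rewrite E; ring).
  destruct (Rle_lt_or_eq_dec z b) as [Hl|Hl]; try lra.
  + right. exists z. split; [lra|]. split; auto. split.
    * intros x Hx Fx. destruct (Rtotal_order x z) as [C|[C|C]]; auto.
      assert (K := Lt x ltac:(lra)). rewrite Fx in K. lra.
      assert (K := Gt x ltac:(lra)). rewrite Fx in K. lra.
    * assert (HGb := GG_pos f sg b Hs (Gt b ltac:(lra))).
      replace (GG f b - GG f a - 2) with (plus (- sg * (hh f z - hh f a)) (sg * (hh f b - hh f z))); auto.
      unfold plus; simpl. rewrite HGb. replace (GG f a) with (-(sg*hh f a)) by lra.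
      enough (E: forall A B C, -sg*(C - A) + sg*(B - C) = sg*B - -(sg*A) - 2*(sg*C)) by (rewrite E, Hhz; ring).
      intros; ring.
  + subst z. left. split.
    * intros x Hx Fx. assert (K := Lt x ltac:(lra)). rewrite Fx in K. lra.
    * replace (GG f b - GG f a) with (plus (- sg * (hh f b - hh f a)) (sg * (hh f b - hh f b))); auto.
      unfold plus; simpl. rewrite GG_zero by auto. replace (GG f a) with (-(sg*hh f a)) by lra.
      enough (E: forall A B, -sg*(B - A) + sg*(B - B) = -(sg*B) - -(sg*A)) by (rewrite E, Hhz; ring).
      intros; ring.
- assert (Hnz : forall x, a <= x <= b -> f x <> 0).
  { intros x Hx E. apply Hn. exists x. auto. }
  assert (Iv := ivt f H1 a b ltac:(lra) Hnz).
  assert (Fa := Hnz a ltac:(lra)).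
  set (sg := if Rlt_dec 0 (f a) then 1 else -1).
  assert (Hs : sg = 1 \/ sg = -1) by (unfold sg; destruct Rlt_dec; auto).
  assert (Hsa : 0 < sg * f a) by (unfold sg; destruct Rlt_dec; lra).
  assert (Hsx : forall x, a <= x <= b -> 0 < sg * f x).
  { intros x Hx. assert (K := Iv x Hx). destruct Hs as [E|E]; rewrite E in *; nra. }
  left. split.
  + intros x Hx. apply Hnz. lra.
  + rewrite (GG_pos f sg b Hs (Hsx b ltac:(lra))), (GG_pos f sg a Hs Hsa).
    replace (sg * hh f b - sg * hh f a) with (sg * (hh f b - hh f a)) by ring.
    apply int_sign; auto. lra. intros x Hx. assert (K := Hsx x Hx). lra.
Qed.

Lemma Derive_per f (Hper : periodic_2pi f) (H1 : forall x, ex_derive f x) :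
  Derive f (2*PI) = Derive f 0.
Proof.
assert (K : is_derive (fun y => f (y + 2*PI)) 0 (scal 1 (Derive f (0 + 2*PI)))).
{ apply (is_derive_comp f (fun y => y + 2*PI)). apply Derive_correct; auto.
  auto_derive; auto. }
assert (K' : is_derive f 0 (scal 1 (Derive f (0 + 2*PI)))).
{ apply (is_derive_ext (fun y => f (y + 2*PI))). intros t; apply Hper. auto. }
rewrite (is_derive_unique _ _ _ K'). rewrite Rplus_0_l. unfold scal; simpl. unfold mult; simpl. ring.
Qed.

Lemma GG_per f (Hper : periodic_2pi f) (H1 : forall x, ex_derive f x) : GG f (2*PI) = GG f 0.
Proof.
assert (E : f (2*PI) = f 0) by (rewrite <- (Hper 0), Rplus_0_l; auto).
unfold GG, hh, eta. rewrite E, Derive_per; auto.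
Qed.

Theorem proposition1 (f : R -> R) :
  periodic_2pi f -> C2 f -> nondegenerate f ->
  exists n : nat, zero_count_is f n /\
    INR n = - (1 / 2) * RInt (kac_integrand f) 0 (2 * PI).
Proof.
intros Hper [H1 [H2 H3]] [c [Hc He]].
assert (Hp : forall x, 0 < eta f x) by (intros x; specialize (He x); lra).
destruct (delta_exists f H1 H2 H3 c Hc He) as [d [Hd D]].
assert (HP := PI_RGT_0).
destruct (INR_unbounded (2*PI/d)) as [N HN].
assert (HN0 : 0 < INR N).
{ assert (0 < 2*PI/d) by (apply Rdiv_lt_0_compat; lra). lra. }
set (step := 2*PI / INR N).
assert (Hst : 0 < step) by (apply Rdiv_lt_0_compat; lra).
assert (Hsd : step <= d).
{ unfold step. apply Rmult_le_reg_r with (INR N); auto. unfold Rdiv. rewrite Rmult_assoc, Rinv_l by lra.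
  apply Rmult_lt_compat_l with (r := d) in HN; auto. unfold Rdiv in HN.
  replace (d * (2 * PI * / d)) with (2*PI) in HN by (field; lra). lra. }
assert (HNs : INR N * step = 2*PI) by (unfold step; field; lra).
assert (Cl : forall m, (m <= N)%nat -> exists l, NoDup l /\
   (forall x, In x l <-> 0 <= x < INR m * step /\ f x = 0) /\
   is_RInt (kac_integrand f) 0 (INR m * step) (GG f (INR m * step) - GG f 0 - 2 * INR (length l))).
{ induction m as [|m IH]; intros Hm.
  - exists nil. split; [constructor|]. split.
    + intros x. simpl. lra.
    + simpl. rewrite Rmult_0_l. replace (GG f 0 - GG f 0 - 2 * 0) with (@zero R_NormedModule).
      apply is_RInt_point. unfold zero; simpl. ring.
  - destruct (IH ltac:(lia)) as [l [Hnd [Hin Hint]]].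
    assert (Hm' : INR (S m) <= INR N) by (apply le_INR; lia).
    assert (Hb : INR (S m) * step = INR m * step + step) by (rewrite S_INR; ring).
    assert (Hm0 : 0 <= INR m) by apply pos_INR.
    destruct (piece f H1 H2 H3 Hp d D (INR m * step) (INR (S m) * step)) as [[Hnz Hi]|[z [Hz [Fz [Hu Hi]]]]].
    { apply Rmult_le_pos; lra. }
    { lra. }
    { rewrite <- HNs. apply Rmult_le_compat_r; lra. }
    { lra. }
    + exists l. split; auto. split.
      * intros x. rewrite Hin. split; intros [Hx Fx]; split; auto; try lra.
        destruct (Rlt_or_le x (INR m * step)); try lra. exfalso. apply (Hnz x); auto. lra.
      * assert (I := is_RInt_Chasles _ _ _ _ _ _ Hint Hi).
        replace (GG f (INR (S m) * step) - GG f 0 - 2 * INR (length l)) with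
          (plus (GG f (INR m * step) - GG f 0 - 2 * INR (length l)) (GG f (INR (S m) * step) - GG f (INR m * step))); auto.
        unfold plus; simpl; ring.
    + exists (z :: l). split.
      { constructor; auto. rewrite Hin. lra. } split.
      * intros x. change (In x (z :: l)) with (z = x \/ In x l). rewrite Hin. split.
        -- intros [E|[Hx Fx]]. subst x. split; auto. assert (0 <= INR m * step) by (apply Rmult_le_pos; lra). lra. split; auto. lra.
        -- intros [Hx Fx]. destruct (Rlt_or_le x (INR m * step)). right; split; auto; lra.
           left. symmetry. apply Hu; auto. lra.
      * assert (I := is_RInt_Chasles _ _ _ _ _ _ Hint Hi).
        replace (GG f (INR (S m) * step) - GG f 0 - 2 * INR (length (z :: l))) with
          (plus (GG f (INR m * step) - GG f 0 - 2 * INR (length l)) (GG f (INR (S m) * step) - GG f (INR m * step) - 2)); auto.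
        change (length (z::l)) with (S (length l)); rewrite (S_INR (length l)); unfold plus; simpl; ring. }
destruct (Cl N (le_n N)) as [l [Hnd [Hin Hint]]].
rewrite HNs in Hin, Hint. rewrite GG_per in Hint; auto.
exists (length l). split.
- exists l. auto.
- rewrite (is_RInt_unique _ _ _ _ Hint). field.
Qed.
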